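(* Let $\mathscr{C}\subseteq\mathbb{F}_2^{n}$ be a binary linear block code of length $n$ and dimension $k$, with no idle bits and with minimum distance $d_{\min}\ge 2$. Fix $p\in[0,1]$. For each position $j\in\{1,\dots,n\}$, let $E_j\subseteq\{1,\dots,n\}\setminus\{j\}$ be a random set of erased positions, each position $\ell\neq j$ belonging to $E_j$ independently with probability $p$, and let $S_j=\{1,\dots,n\}\setminus(E_j\cup\{j\})$ be the set of non-erased positions other than $j$. Say that position $j$ is recoverable by (extrinsic) MAP erasure decoding if for all $c,c'\in\mathscr{C}$ with $c_\ell=c'_\ell$ for all $\ell\in S_j$ one has $c_j=c'_j$. Let $q$ be the probability that position $j$ is not recoverable, averaged uniformly over $j\in\{1,\dots,n\}$. Then $$q=\frac{1}{n}\sum_{t=0}^{n-1}p^{t}(1-p)^{n-1-t}\Big[(n-t)\,\tilde e_{n-t}-(t+1)\,\tilde e_{n-1-t}\Big],$$ where $\tilde e_g$ is the $g$th un-normalized information function of $\mathscr{C}$.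
   Context: A coordinate of a linear code is an idle bit if it equals $0$ in every codeword (equivalently, the corresponding column of a generator matrix is zero). Let $\mathbf{G}$ be a $k\times n$ generator matrix of $\mathscr{C}$. For $0\le g\le n$, the $g$th un-normalized information function of $\mathscr{C}$ is $\tilde e_g=\sum_{T}\mathrm{rank}(\mathbf{G}_T)$, where the sum runs over all $\binom{n}{g}$ subsets $T\subseteq\{1,\dots,n\}$ of size $g$ and $\mathbf{G}_T$ is the $k\times g$ submatrix of $\mathbf{G}$ formed by the columns indexed by $T$ (with $\mathrm{rank}$ of an empty matrix equal to $0$, so $\tilde e_0=0$); it does not depend on the choice of generator matrix. *)

(* Defs.v *)
From HB Require Import structures.
From mathcomp Require Import all_boot all_order all_algebra all_fingroup all_field.
Set Implicit Arguments. Unset Strict Implicit. Unset Printing Implicit Defensive.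
Import GRing.Theory Num.Theory.
Local Open Scope ring_scope.

(* A binary linear code of length n and dimension k is the row space of a
   generator matrix G : 'M['F_2]_(k, n) with row_free G (rank k). *)

Definition codeword (k n : nat) (G : 'M['F_2]_(k, n)) (c : 'rV['F_2]_n) : bool :=
  (c <= G)%MS.

Definition no_idle_bits (k n : nat) (G : 'M['F_2]_(k, n)) : Prop :=
  forall j : 'I_n, exists c : 'rV['F_2]_n, codeword G c /\ c 0 j != 0.

Definition wt (n : nat) (c : 'rV['F_2]_n) : nat := #|[set l : 'I_n | c 0 l != 0]|.

Definition dmin_ge2 (k n : nat) (G : 'M['F_2]_(k, n)) : Prop :=
  forall c : 'rV['F_2]_n, codeword G c -> c != 0 -> (2 <= wt c)%N.

Definition colsubset (k n : nat) (G : 'M['F_2]_(k, n)) (T : {set 'I_n})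
  : 'M['F_2]_(k, #|T|) :=
  colsub (fun i : 'I_#|T| => enum_val i) G.

Definition info_fun (k n : nat) (G : 'M['F_2]_(k, n)) (g : nat) : nat :=
  (\sum_(T : {set 'I_n} | #|T| == g) \rank (colsubset G T))%N.

Definition recoverable (k n : nat) (G : 'M['F_2]_(k, n)) (j : 'I_n)
  (S : {set 'I_n}) : bool :=
  [forall c : 'rV['F_2]_n, forall c' : 'rV['F_2]_n,
     codeword G c ==> codeword G c' ==>
     [forall l in S, c 0 l == c' 0 l] ==> (c 0 j == c' 0 j)].

(* average (over j) probability that j is not recoverable, where each l <> j
   is erased independently with probability p (E = erased set, S = ~:(j |: E)) *)
Definition unrec_prob (R : realFieldType) (k n : nat) (G : 'M['F_2]_(k, n))
  (p : R) : R :=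
  (n%:R)^-1 * \sum_(j < n) \sum_(E : {set 'I_n} | j \notin E)
     p ^+ #|E| * (1 - p) ^+ (n.-1 - #|E|) *
     (~~ recoverable G j (~: (j |: E)))%:R.

(* Main.v *)
Require Import Defs.
From HB Require Import structures.
From mathcomp Require Import all_boot all_order all_algebra all_fingroup all_field.
Set Implicit Arguments. Unset Strict Implicit. Unset Printing Implicit Defensive.
Import GRing.Theory Num.Theory.
Local Open Scope ring_scope.

Section LA.
Variables (k n : nat) (G : 'M['F_2]_(k, n)).

Definition AS (T : {set 'I_n}) : 'M['F_2]_(n, k) :=
  \matrix_(l, i) (if l \in T then G i l else 0).

Lemma row_AS T l : row l (AS T) = if l \in T then row l G^T else 0.
Proof. by apply/rowP => i; rewrite !mxE; case: (l \in T); rewrite ?mxE. Qed.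

Lemma rk_AS T : \rank (colsubset G T) = \rank (AS T).
Proof.
rewrite -mxrank_tr /colsubset trmx_mxsub; apply/eqmx_rank/andP; split.
  apply/row_subP => i; rewrite row_mxsub mxsub_id.
  have Hi : enum_val i \in T by apply: enum_valP.
  have -> : row (enum_val i) G^T = row (enum_val i) (AS T) by rewrite row_AS Hi.
  exact: row_sub.
apply/row_subP => l; rewrite row_AS; case: ifP => Hl; last exact: sub0mx.
have -> : row l G^T = row (enum_rank_in Hl l) (mxsub (fun i : 'I_#|T| => enum_val i) id G^T).
  by rewrite row_mxsub mxsub_id enum_rankK_in.
exact: row_sub.
Qed.

Lemma AS_U1 j S : (AS (j |: S) == AS S + row j G^T)%MS.
Proof.
apply/andP; split.
  apply/row_subP => l; rewrite row_AS in_setU1.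
  case: eqP => [->|_] /=; first exact: addsmxSr.
  case: ifP => Hl; last exact: sub0mx.
  apply: submx_trans (addsmxSl _ _).
  have -> : row l G^T = row l (AS S) by rewrite row_AS Hl.
  exact: row_sub.
rewrite addsmx_sub; apply/andP; split.
  apply/row_subP => l; rewrite row_AS; case: ifP => Hl; last exact: sub0mx.
  have -> : row l G^T = row l (AS (j |: S)) by rewrite row_AS in_setU1 Hl orbT.
  exact: row_sub.
have -> : row j G^T = row j (AS (j |: S)) by rewrite row_AS setU11.
exact: row_sub.
Qed.

Lemma rank_add_row m (A : 'M['F_2]_(m, k)) (u : 'rV['F_2]_k) :
  \rank (A + u)%MS = (\rank A + ~~ (u <= A)%MS)%N.
Proof.
case: (boolP (u <= A)%MS) => Hu /=.
  by rewrite addn0; have /addsmx_idPl -> := Hu.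
have [H1le H1eq] := mxrank_leqif_sup (addsmxSl A u).
have Hlt : (\rank A < \rank (A + u))%N.
  by rewrite ltn_neqAle H1le andbT H1eq addsmx_sub submx_refl /=.
have [H2 _] := mxrank_adds_leqif A u.
have H3 : (\rank u <= 1)%N by exact: rank_leq_row.
apply/eqP; rewrite eqn_leq addn1 Hlt andbT.
by apply: leq_trans H2 _; rewrite -[X in (_ <= X)%N]addn1 leq_add2l.
Qed.

Lemma cw_entry (x : 'rV['F_2]_k) l : (x *m G) 0 l = (row l G^T *m x^T) 0 0.
Proof. by rewrite !mxE; apply: eq_bigr => i _; rewrite !mxE mulrC. Qed.

Lemma AS_mul T (y : 'cV['F_2]_k) l :
  (AS T *m y) l 0 = if l \in T then (row l G^T *m y) 0 0 else 0.
Proof.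
rewrite !mxE; case: ifP => Hl.
  by apply: eq_bigr => i _; rewrite !mxE Hl.
by apply: big1 => i _; rewrite !mxE Hl mul0r.
Qed.

Lemma recov_iff j S : recoverable G j S = (row j G^T <= AS S)%MS.
Proof.
apply/idP/idP.
  move=> /forallP Hr; rewrite submxE; apply/eqP/rowP => i.
  rewrite [RHS]mxE.
  pose y := cokermx (AS S) *m delta_mx i (0 : 'I_1).
  have Hy : AS S *m y = 0 by rewrite /y mulmxA mulmx_coker mul0mx.
  have := Hr (y^T *m G) => /forallP /(_ 0).
  rewrite /codeword submxMl /= sub0mx /=.
  have -> : [forall l in S, (y^T *m G) 0 l == (0 : 'rV_n) 0 l].
    apply/forall_inP => l Hl.
    have Hl0 : (AS S *m y) l 0 = 0 by rewrite Hy mxE.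
    move: Hl0; rewrite AS_mul Hl => Hl0.
    by rewrite cw_entry trmxK Hl0 mxE.
  rewrite /= cw_entry trmxK [X in _ == X]mxE => /eqP Hj.
  have -> : (row j G^T *m cokermx (AS S)) 0 i = (row j G^T *m y) 0 0.
    by rewrite /y [in RHS]mulmxA -[in RHS]colE [in RHS]mxE.
  by [].
move=> /submxP [w Hw]; apply/forallP => c; apply/forallP => c'.
apply/implyP => /submxP [x ->]; apply/implyP => /submxP [x' ->].
apply/implyP => /forall_inP Hag.
rewrite -subr_eq0.
have -> : (x *m G) 0 j - (x' *m G) 0 j = ((x - x') *m G) 0 j.
  by rewrite mulmxBl !mxE.
rewrite cw_entry Hw -mulmxA mxE.
apply/eqP; apply: big1 => l _.
rewrite AS_mul; case: ifP => Hl; last by rewrite mulr0.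
rewrite -cw_entry mulmxBl !mxE.
by have /eqP := Hag l Hl; rewrite !mxE => ->; rewrite subrr mulr0.
Qed.

Lemma key (j : 'I_n) (S : {set 'I_n}) : j \notin S ->
  \rank (colsubset G (j |: S)) = (\rank (colsubset G S) + ~~ recoverable G j S)%N.
Proof.
move=> _; rewrite !rk_AS recov_iff (eqmx_rank (AS_U1 j S)).
exact: rank_add_row.
Qed.
End LA.
Section Comb.
Variables (R : realFieldType) (n : nat).

Lemma swap_sum (P : 'I_n -> {set 'I_n} -> bool) (f : {set 'I_n} -> R) :
  \sum_(j < n) \sum_(E | P j E) f E = \sum_E #|[set j | P j E]|%:R * f E.
Proof.
under eq_bigr do rewrite big_mkcond.
rewrite exchange_big; apply: eq_bigr => E _ /=.
rewrite -big_mkcond /=.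
rewrite (eq_bigl (fun j => j \in [set j | P j E])) ?sumr_const ?mulr_natl //.
by move=> j; rewrite inE.
Qed.

Lemma card_le (E : {set 'I_n}) : (#|E| <= n)%N.
Proof. by rewrite -[X in (_ <= X)%N]card_ord -cardsT subset_leq_card ?subsetT. Qed.

Lemma group_sum (g : nat -> R) (h : {set 'I_n} -> R) :
  \sum_(E : {set 'I_n}) g #|E| * h E =
  \sum_(t < n.+1) g t * \sum_(E : {set 'I_n} | #|E| == t) h E.
Proof.
rewrite (partition_big (fun E : {set 'I_n} => (inord #|E| : 'I_n.+1)) predT) //=.
apply: eq_bigr => t _; rewrite mulr_sumr.
have HE : forall E : {set 'I_n}, (inord #|E| == t :> 'I_n.+1) = (#|E| == t).
  move=> E; apply/eqP/eqP => [<-|Ht]; first by rewrite inordK // ltnS card_le.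
  by apply/val_inj; rewrite /= inordK // ltnS card_le.
apply: eq_big => [E|E]; first by rewrite HE.
by rewrite HE => /eqP ->.
Qed.

Lemma reindex_add1 (j : 'I_n) (f : {set 'I_n} -> R) :
  \sum_(E : {set 'I_n} | j \notin E) f (j |: E) = \sum_(F : {set 'I_n} | j \in F) f F.
Proof.
rewrite [RHS](reindex_onto (fun E => j |: E) (fun F => F :\ j)) /=; last first.
  by move=> F HF; rewrite setD1K.
apply: eq_bigl => E; rewrite setU11 /=.
case: (boolP (j \in E)) => HE.
  by symmetry; apply/eqP => HE'; move: HE; rewrite -HE' setD11.
by rewrite setU1K // eqxx.
Qed.
End Comb.
Lemma unrec_eq (R : realFieldType) k n (G : 'M['F_2]_(k, n)) (j : 'I_n) (E : {set 'I_n}) :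
  j \notin E ->
  (~~ recoverable G j (~: (j |: E)))%:R =
  (\rank (colsubset G (~: E)))%:R - (\rank (colsubset G (~: (j |: E))))%:R :> R.
Proof.
move=> HE.
have -> : ~: E = j |: ~: (j |: E).
  apply/setP => x; rewrite !inE; case: (eqVneq x j) => [->|] //=.
rewrite key; last by rewrite !inE eqxx.
by rewrite natrD addrC addKr.
Qed.

Lemma info_compl (R : realFieldType) k n (G : 'M['F_2]_(k, n)) (t : nat) : (t <= n)%N ->
  \sum_(E : {set 'I_n} | #|E| == t) (\rank (colsubset G (~: E)))%:R
  = (info_fun G (n - t))%:R :> R.
Proof.
move=> Ht; rewrite /info_fun natr_sum.
rewrite [RHS](reindex_inj (@setC_inj _)) /=.
apply: eq_bigl => E.
have Hc : (#|E| + #|~:E| = n)%N by rewrite cardsC card_ord.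
rewrite (_ : #|~:E| = n - #|E|)%N; last by apply/eqP; rewrite -(eqn_add2l #|E|) Hc subnKC ?card_le.
have := card_le E.
move: #|E| => a Ha.
apply/eqP/eqP => [->//|H].
by rewrite -(subKn Ha) H subKn.
Qed.

Theorem proposition1 (R : realFieldType) (k n : nat) (G : 'M['F_2]_(k, n))
  (p : R) :
  row_free G -> no_idle_bits G -> dmin_ge2 G -> 0 <= p -> p <= 1 ->
  unrec_prob G p =
  (n%:R)^-1 * \sum_(t < n) p ^+ t * (1 - p) ^+ (n.-1 - t) *
     ((n - t)%:R * (info_fun G (n - t))%:R
      - (t + 1)%:R * (info_fun G (n.-1 - t))%:R).
Proof.
move=> _ _ _ _ _; rewrite /unrec_prob; congr (_ * _).
set w := fun t : nat => p ^+ t * (1 - p) ^+ (n.-1 - t).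
set rk := fun T : {set 'I_n} => (\rank (colsubset G T))%:R : R.
transitivity (\sum_(j < n) \sum_(E : {set 'I_n} | j \notin E) w #|E| * rk (~: E)
  - \sum_(j < n) \sum_(E : {set 'I_n} | j \notin E) w (#|j |: E|.-1) * rk (~: (j |: E))).
  rewrite -sumrB; apply: eq_bigr => j _; rewrite -sumrB; apply: eq_bigr => E HE.
  by rewrite unrec_eq // mulrBr cardsU1 HE.
have H2 : forall j : 'I_n, \sum_(E : {set 'I_n} | j \notin E) w (#|j |: E|.-1) * rk (~: (j |: E))
   = \sum_(F : {set 'I_n} | j \in F) w #|F|.-1 * rk (~: F).
  by move=> j; exact: (reindex_add1 j (fun F => w #|F|.-1 * rk (~: F))).
rewrite [X in _ - X](eq_bigr _ (fun j _ => H2 j)).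
rewrite (swap_sum (fun j E => j \notin E)) (swap_sum (fun j E => j \in E)).
have E1 : forall E : {set 'I_n}, [set j | j \notin E] = ~: E.
  by move=> E; apply/setP => x; rewrite !inE.
have E2 : forall E : {set 'I_n}, [set j in E] = E.
  by move=> E; apply/setP => x; rewrite !inE.
have Hc : forall E : {set 'I_n}, #|~: E| = (n - #|E|)%N.
  move=> E; apply/eqP; rewrite -(eqn_add2l #|E|) subnKC ?card_le //.
  by rewrite cardsC card_ord.
have HA : \sum_(E : {set 'I_n}) #|[set j | j \notin E]|%:R * (w #|E| * rk (~: E)) =
   \sum_(t < n) (n - t)%:R * w t * (info_fun G (n - t))%:R.
  transitivity (\sum_(E : {set 'I_n}) ((n - #|E|)%:R * w #|E|) * rk (~: E)).
    by apply: eq_bigr => E _; rewrite E1 Hc mulrA.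
  have := group_sum (fun t => (n - t)%:R * w t) (fun E => rk (~: E)).
  move=> /= ->.
  rewrite big_ord_recr /= subnn mul0r mul0r addr0.
  apply: eq_bigr => t _ /=; rewrite /rk info_compl //.
  exact: ltnW.
have HB : \sum_(E : {set 'I_n}) #|[set j in E]|%:R * (w #|E|.-1 * rk (~: E)) =
   \sum_(t < n) (t + 1)%:R * w t * (info_fun G (n.-1 - t))%:R.
  transitivity (\sum_(E : {set 'I_n}) (#|E|%:R * w #|E|.-1) * rk (~: E)).
    by apply: eq_bigr => E _; rewrite E2 mulrA.
  have := group_sum (fun t => t%:R * w t.-1) (fun E => rk (~: E)).
  move=> /= ->.
  rewrite big_ord_recl /= mul0r mul0r add0r.
  apply: eq_bigr => t _ /=; rewrite /rk info_compl; last exact: ltn_ord.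
  rewrite /bump /= add1n addn1 /=.
  have -> : (n - t.+1 = n.-1 - t)%N by rewrite -subn1 subnAC subn1 subnS.
  by [].
rewrite HA HB -sumrB; apply: eq_bigr => t _.
rewrite mulrBr !mulrA; congr (_ - _); congr (_ * _); by rewrite -mulrA mulrC.
Qed.
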